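(* Let $q>1$, let $V=\bigoplus_iV_i$ be a finite-dimensional graded $\mathbb Q_\ell$-vector space and $F$ a semisimple degree-zero linear map on $V$ such that: (i) every eigenvalue of $F$ on $V_i$ (in $\overline{\mathbb Q}_\ell\cong\mathbb C$) has absolute value $q^{i/2}$; (ii) there is a Laurent polynomial $Q_V(t)=\sum_ia_it^i$ such that for all $k\ge0$ the supertrace of $F^k$ on $V$ equals $Q_V(q^k)=\sum_ia_iq^{ki}$. Then $V_{2i+1}=0$ for all $i$, $F$ acts on $V_{2i}$ as multiplication by $q^i$, and $\operatorname{Tr}_{F^k}(V)=Q_V(q^k)=P_V(q^{k/2})$, where $P_V(t)=\sum_i\dim V_i\,t^i$ is the Poincaré polynomial of $V$.
   Context: The supertrace of $F^k$ is $\sum_i(-1)^i\operatorname{Tr}(F^k|_{V_i})$. In the paper $q$ is a power of a prime. *)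

(* Defs.v *)
From HB Require Import structures.
From mathcomp Require Import all_boot all_order all_algebra.
Set Implicit Arguments. Unset Strict Implicit. Unset Printing Implicit Defensive.
Import Order.TTheory GRing.Theory Num.Theory.
Local Open Scope ring_scope.

(* A graded finite-dimensional vector space V = (+)_j V_(g j), j : 'I_n,
   with graded pieces of dimension d j and grade g j := m + j (an integer);
   a degree-zero endomorphism F is a family of square blocks F j : 'M_(d j). *)

Definition grade (m : int) (n : nat) (j : 'I_n) : int := m + (j : nat)%:Z.

Definition supertrace (C : numClosedFieldType) (m : int) (n : nat)
  (d : 'I_n -> nat) (F : forall j : 'I_n, 'M[C]_(d j)) (k : nat) : C :=
  \sum_(j < n) (-1) ^ (grade m j) * \tr (F j ^+ k).

Definition laurent_eval (C : numClosedFieldType) (m0 : int) (l : nat)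
  (a : 'I_l -> C) (t : C) : C :=
  \sum_(i < l) a i * t ^ (m0 + (i : nat)%:Z).

Definition poincare_eval (C : numClosedFieldType) (m : int) (n : nat)
  (d : 'I_n -> nat) (t : C) : C :=
  \sum_(j < n) (d j)%:R * t ^ (grade m j).

(* Main.v *)
Set Warnings "-notation-overridden,-ambiguous-paths".
Require Import Defs.
From HB Require Import structures.
From mathcomp Require Import all_boot all_order all_algebra.
Import Order.TTheory GRing.Theory Num.Theory.
Local Open Scope ring_scope.

Lemma expz_inj (R : numFieldType) (x : R) : 1 < x -> injective (exprz x).
Proof.
move=> x1.
have x0 : x != 0 by apply: lt0r_neq0; apply: lt_trans x1.
suff H : forall e1 e2 : int, e1 <= e2 -> x ^ e1 = x ^ e2 -> e1 = e2.
  move=> e1 e2 E; case: (lerP e1 e2) => h; first exact: H.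
  by apply/esym/H => //; apply: ltW.
move=> e1 e2 le E.
have [n hn] : exists n : nat, e2 = e1 + n%:Z.
  exists `|e2 - e1|%N; rewrite abszE ger0_norm ?subr_ge0 //.
  by rewrite addrCA subrr addr0.
move: E; rewrite hn expfzDr // -{1}[x ^ e1]mulr1 => /(mulfI (expfz_neq0 _ x0)) h1.
case: n hn h1 => [|n] hn h1; first by rewrite addr0.
have := exprn_egt1 n.+1 x1; rewrite -[x ^ _]/(x ^+ n.+1) in h1.
by rewrite -h1 ltxx.
Qed.

Lemma expsum (F : fieldType) (s : seq (F * F)) :
  (forall k, \sum_(x <- s) x.1 * x.2 ^+ k = 0) ->
  forall v, \sum_(x <- s | x.2 == v) x.1 = 0.
Proof.
move=> H v.
pose p := \prod_(x <- s | x.2 != v) ('X - x.2%:P).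
have E : \sum_(x <- s) x.1 * p.[x.2] = 0.
  under eq_bigr do rewrite horner_coef big_distrr /=.
  rewrite exchange_big /=; apply: big1 => i _.
  under eq_bigr do rewrite mulrCA.
  by rewrite -big_distrr /= H mulr0.
rewrite (bigID (fun x => x.2 == v)) /= in E.
rewrite [X in _ + X]big_seq_cond [X in _ + X]big1 ?addr0 in E; last first.
  move=> x /andP[xs xv]; apply/eqP; rewrite mulf_eq0 horner_prod prodf_seq_eq0.
  by apply/orP; right; apply/hasP; exists x => //; rewrite xv hornerXsubC subrr eqxx.
rewrite (eq_bigr (fun x => x.1 * p.[v])) in E; last by move=> x /eqP->.
have pv : p.[v] != 0.
  rewrite horner_prod prodf_seq_neq0; apply/allP => x _.
  by apply/implyP; rewrite hornerXsubC subr_eq0 eq_sym.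
move: E; rewrite -big_distrl /= => /eqP; rewrite mulf_eq0 (negbTE pv) orbF.
by move/eqP.
Qed.

Lemma diag_decomp (F : fieldType) n (A P : 'M[F]_n) : P \in unitmx ->
  similar_diag P A -> A = invmx P *m diag_mx (\row_r conjmx P A r r) *m P.
Proof.
move=> Pu /diag_mxP [d hd].
have -> : \row_r conjmx P A r r = d.
  by apply/rowP => r; rewrite mxE hd mxE eqxx mulr1n.
by rewrite -hd -conjVmx // conjmxK.
Qed.

Section Conj.
Variables (F : fieldType) (n : nat) (P : 'M[F]_n) (D : 'rV[F]_n).
Hypothesis Pu : P \in unitmx.

Lemma conj_exp k : (invmx P *m diag_mx D *m P) ^+ k = invmx P *m diag_mx (\row_r D 0 r ^+ k) *m P.
Proof.
elim: k => [|k IH].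
  rewrite expr0.
  have -> : diag_mx (\row_r D 0 r ^+ 0) = 1%:M :> 'M[F]_n.
    by apply/matrixP => i j; rewrite !mxE expr0.
  by rewrite mulmx1 mulVmx.
rewrite exprS IH -mulmxE !mulmxA -[invmx P *m diag_mx D *m P *m invmx P]mulmxA mulmxV // mulmx1.
rewrite -(mulmxA (invmx P)) mulmx_diag; congr (_ *m diag_mx _ *m _).
by apply/rowP => r; rewrite !mxE exprS.
Qed.

Lemma conj_tr k : \tr ((invmx P *m diag_mx D *m P) ^+ k) = \sum_r D 0 r ^+ k.
Proof.
rewrite conj_exp mxtrace_mulC mulmxA mulmxV // mul1mx mxtrace_diag.
by apply: eq_bigr => r _; rewrite mxE.
Qed.

Lemma conj_eig r : eigenvalue (invmx P *m diag_mx D *m P) (D 0 r).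
Proof.
apply/eigenvalueP; exists (delta_mx 0 r *m P).
  rewrite !mulmxA mulmxK // scalemxAl; congr (_ *m _).
  apply/rowP => j; rewrite mul_mx_diag !mxE eqxx /=; case: eqP => [->|]; first by rewrite mulrC.
  by rewrite mul0r mulr0.
apply/eqP => /(congr1 (mulmx^~ (invmx P))); rewrite mulmxK // mul0mx => /rowP /(_ r).
by rewrite !mxE !eqxx /= => /eqP; rewrite oner_eq0.
Qed.

Lemma conj_scalar c : (forall r, D 0 r = c) -> invmx P *m diag_mx D *m P = c%:M.
Proof.
move=> hc; have -> : diag_mx D = c%:M.
  by apply/matrixP => i j; rewrite !mxE hc.
by rewrite mul_mx_scalar -scalemxAl mulVmx // scalemx1.
Qed.
End Conj.

Theorem lemma3p4 (C : numClosedFieldType) (q : C) (m : int) (n : nat)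
  (d : 'I_n -> nat) (F : forall j : 'I_n, 'M[C]_(d j))
  (m0 : int) (l : nat) (a : 'I_l -> C) :
  1 < q ->
  (forall j : 'I_n, diagonalizable (F j)) ->
  (forall (j : 'I_n) (x : C), eigenvalue (F j) x ->
      `|x| = sqrtC q ^ (grade m j)) ->
  (forall k : nat, @supertrace C m n d F k = @laurent_eval C m0 l a (q ^+ k)) ->
  [/\ (forall j : 'I_n, odd `|grade m j|%N -> d j = 0%N),
      (forall (j : 'I_n) (i : int), grade m j = 2 * i ->
          F j = (q ^ i)%:M) &
      (forall k : nat,
          @supertrace C m n d F k = @laurent_eval C m0 l a (q ^+ k) /\
          @laurent_eval C m0 l a (q ^+ k) = @poincare_eval C m n d (sqrtC q ^+ k))].
Proof.
move=> q1 hdiag heig hsum.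
have q0 : 0 < q by apply: lt_trans q1.
have sq1 : 1 < sqrtC q.
  by rewrite -sqrtC1 ltr_sqrtC // qualifE /= ?ler01 ?ltW.
have hq : forall e : int, q ^ e = sqrtC q ^ (2 * e).
  by move=> e; rewrite -exprz_exp; congr (_ ^ _); rewrite -[sqrtC q ^ 2]/(sqrtC q ^+ 2) sqrtCK.
have hd' : forall j, exists P : 'M[C]_(d j), (P \in unitmx) && similar_diag P (F j).
  by move=> j; case: (hdiag j) => P Pu hP; exists P; rewrite Pu hP.
pose P j := xchoose (hd' j).
have hP j : (P j \in unitmx) && similar_diag (P j) (F j) := xchooseP (hd' j).
pose D j := \row_r conjmx (P j) (F j) r r.
have hF j : F j = invmx (P j) *m diag_mx (D j) *m P j.
  by case/andP: (hP j) => Pu hs; exact: diag_decomp.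
have htr j k : \tr (F j ^+ k) = \sum_r D j 0 r ^+ k.
  by rewrite hF conj_tr //; case/andP: (hP j).
have habs j r : `|D j 0 r| = sqrtC q ^ grade m j.
  by apply: heig; rewrite hF; apply: conj_eig; case/andP: (hP j).
have ginj : forall j j' : 'I_n, sqrtC q ^ grade m j = sqrtC q ^ grade m j' -> j = j'.
  by move=> j j' /(@expz_inj _ _ sq1); rewrite /grade => /addrI; case => /val_inj.
clearbody D.
have key : forall j r, exists e : int, grade m j = 2 * e /\ D j 0 r = q ^ e.
  move=> j0 r0.
  pose s1 := flatten [seq [seq (((-1) ^ grade m j : C), D j 0 r) | r <- index_enum 'I_(d j)] | j <- index_enum 'I_n].
  pose s2 := [seq (- a i, q ^ (m0 + (i : nat)%:Z)) | i <- index_enum 'I_l].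
  have hs : forall k : nat, \sum_(x <- s1 ++ s2) x.1 * x.2 ^+ k = 0.
    move=> k; rewrite big_cat big_flatten /= big_map /s2 big_map /=.
    under eq_bigr do rewrite big_map.
    have ez : forall (x : C) (e : int), (x ^ e) ^+ k = (x ^+ k) ^ e.
      by move=> x e; exact: (exprzAC x e k).
    under [X in _ + X]eq_bigr do rewrite mulNr ez.
    rewrite sumrN; apply/eqP; rewrite subr_eq0; apply/eqP; transitivity (supertrace m F k); last exact: hsum k. rewrite /supertrace; apply: eq_bigr => j _.
    by rewrite htr big_distrr.
  have := @expsum _ _ hs (D j0 0 r0).
  rewrite big_cat big_flatten /= big_map /s2 big_map /=.
  under eq_bigr do rewrite big_map.
  rewrite (bigD1 j0) //= [X in _ + X + _]big1 ?addr0; last first.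
    move=> j hj; apply: big1 => r /eqP hr; exfalso; move/negP: hj; apply.
    by apply/eqP; apply: ginj; rewrite -(habs j r) hr habs.
  case: (pickP (fun i : 'I_l => q ^ (m0 + (i : nat)%:Z) == D j0 0 r0)) => [i /eqP hi | none]; last first.
    rewrite [X in _ + X]big_pred0 // addr0 sumr_const => /eqP; rewrite mulrn_eq0 expfz_eq0 oppr_eq0 oner_eq0 andbF orbF.
    move=> /eqP/card0_eq/(_ r0); rewrite unfold_in /= => /negbT/negP H; exfalso; apply: H; exact/eqP.
  move=> _; exists (m0 + (i : nat)%:Z); split; last by rewrite hi.
  apply: (@expz_inj _ _ sq1); rewrite -(habs j0 r0) -hi ger0_norm ?hq //.
  by apply: exprz_ge0; rewrite sqrtC_ge0 ltW.
have two_nz : (2 : int) != 0 by [].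
have G2 : forall (j : 'I_n) (i : int), grade m j = 2 * i -> F j = (q ^ i)%:M.
  move=> j i hg; rewrite hF; case/andP: (hP j) => Pu _.
  apply: (@conj_scalar _ _ _ _ Pu) => r.
  have [e [he ->]] := key j r; congr (_ ^ _).
  by apply: (mulfI two_nz); rewrite -he -hg.
have G1 : forall j : 'I_n, odd `|grade m j|%N -> d j = 0%N.
  move=> j; case: (posnP (d j)) => [//|hpos].
  have [e [he _]] := key j (Ordinal hpos).
  by rewrite he abszM oddM.
split=> // k; split; first exact: hsum k.
rewrite -hsum /supertrace /poincare_eval; apply: eq_bigr => j _.
case: (posnP (d j)) => [h0|hpos].
  rewrite htr big1 ?mulr0; last by move=> r _; exfalso; move: (ltn_ord r); move: (nat_of_ord r) => x; rewrite h0.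
  by rewrite h0 mul0r.
have [e [he _]] := key j (Ordinal hpos).
rewrite htr (eq_bigr (fun _ => (q ^ e) ^+ k)); last first.
  move=> r _; have [e' [he' ->]] := key j r; suff -> : e' = e by [].
  by apply: (mulfI two_nz); rewrite -he' he.
rewrite sumr_const card_ord he.
have m1 : (-1 : C) ^ (2 * e) = 1.
  by rewrite -exprz_exp -[(-1 : C) ^ 2]/((-1) ^+ 2) sqrrN expr1n exp1rz.
rewrite m1 mul1r hq [RHS]mulr_natl; congr (_ *+ _).
exact: (exprzAC (sqrtC q) (2 * e) k).
Qed.
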